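(* Let $t\geq 2$ be a fixed integer and let $P$ be a finite poset with the unique cover twin property (UCTP) having at least $2$ elements. Then $\mathrm{sat}^{\star}([t]^n,P)=\Omega(\sqrt{n})$ as $n\to\infty$.
   Context: For positive integers $n,t$, $[n]=\{1,\dots,n\}$ and the hypergrid $[t]^n$ is the set of functions $f:[n]\to[t]$, partially ordered by $f\leq g$ iff $f(i)\leq g(i)$ for all $i\in[n]$. An induced copy of a poset $P$ in a family $\mathcal{F}\subseteq[t]^n$ is an injective map $\phi:P\to\mathcal{F}$ such that $\phi(x)\leq\phi(y)$ iff $x\leq_P y$. A family $\mathcal{F}\subseteq[t]^n$ is induced $P$-free if it contains no induced copy of $P$; it is induced $P$-saturated if it is induced $P$-free and for every $f\in[t]^n\setminus\mathcal{F}$ the family $\mathcal{F}\cup\{f\}$ contains an induced copy of $P$. Whenever $P$ embeds as an induced subposet of $[t]^n$, $\mathrm{sat}^{\star}([t]^n,P)$ denotes the minimum size of an induced $P$-saturated family in $[t]^n$. In a poset $P$, an element $x$ covers an element $y\neq x$ if $y\leq_P x$ and there is no $z\in P\setminus\{x,y\}$ with $y\leq_P z\leq_P x$. $P$ has the UCTP if whenever $x$ covers $y$, there exists $y'\in P\setminus\{x,y\}$ such that $x$ covers $y'$. *)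

(* Defs.v *)
From HB Require Import structures.
From mathcomp Require Import all_boot all_order.
Set Implicit Arguments. Unset Strict Implicit. Unset Printing Implicit Defensive.
Import Order.TTheory.
Local Open Scope order_scope.

(* The hypergrid [t]^n: functions [n] -> [t], encoded as {ffun 'I_n -> 'I_t}
   ([t] = {1..t} is identified with 'I_t = {0..t-1}, an order isomorphism). *)
Definition grid (n t : nat) := {ffun 'I_n -> 'I_t}.

Definition grid_le (n t : nat) (f g : grid n t) : bool :=
  [forall i, (f i <= g i)%N].

Definition induced_copy (d : Order.disp_t) (P : finPOrderType d) (n t : nat)
    (F : {set grid n t}) (phi : P -> grid n t) : Prop :=
  injective phi /\ (forall x, phi x \in F) /\
  (forall x y, grid_le (phi x) (phi y) = (x <= y)).

Definition induced_free (d : Order.disp_t) (P : finPOrderType d) (n t : nat)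
    (F : {set grid n t}) : Prop :=
  ~ exists phi : P -> grid n t, induced_copy F phi.

Definition induced_saturated (d : Order.disp_t) (P : finPOrderType d) (n t : nat)
    (F : {set grid n t}) : Prop :=
  induced_free P F /\
  forall f : grid n t, f \notin F ->
    exists phi : P -> grid n t, induced_copy (f |: F) phi.

Definition covers (d : Order.disp_t) (P : finPOrderType d) (x y : P) : Prop :=
  y != x /\ y <= x /\ ~ exists z : P, [/\ z != x, z != y, y <= z & z <= x].

Definition UCTP (d : Order.disp_t) (P : finPOrderType d) : Prop :=
  forall x y : P, covers x y ->
    exists y' : P, [/\ y' != x, y' != y & covers x y'].

(* Main.v *)
Require Import Defs.
From mathcomp Require Import all_boot all_order zify.
Import Order.TTheory.
Set Implicit Arguments. Unset Strict Implicit. Unset Printing Implicit Defensive.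

Lemma grid_leP n t (f g : grid n t) :
  reflect (forall i, (f i <= g i)%N) (grid_le f g).
Proof. exact: forallP. Qed.

Lemma grid_le_refl n t (f : grid n t) : grid_le f f.
Proof. by apply/grid_leP. Qed.

Lemma grid_le_trans n t (f g h : grid n t) :
  grid_le f g -> grid_le g h -> grid_le f h.
Proof.
move=> /grid_leP H1 /grid_leP H2; apply/grid_leP => i.
exact: leq_trans (H1 i) (H2 i).
Qed.

Lemma replace_copy d (P : finPOrderType d) n t (F : {set grid n t})
  (phi : P -> grid n t) (x : P) (Y : grid n t) :
  induced_copy (phi x |: F) phi -> phi x \notin F -> Y \in F ->
  (forall w, w != x -> phi w != Y) ->
  (forall z, z != x -> grid_le (phi z) Y = (z <= x)%O) ->
  (forall z, z != x -> grid_le Y (phi z) = (x <= z)%O) ->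
  induced_free P F -> False.
Proof.
move=> [inj [inF ord]] Xn YF Yimg H1 H2; apply.
have phiF : forall z, z != x -> phi z \in F.
  move=> z zx; have := inF z; rewrite in_setU1; case/orP => // /eqP e.
  by move: zx; rewrite -(inj _ _ e) eqxx.
exists (fun z => if z == x then Y else phi z); split; [|split].
- move=> a b /=; case: (eqVneq a x) => [->|ax]; case: (eqVneq b x) => [->|bx] //.
  + by move=> e; move: (Yimg b bx); rewrite -e eqxx.
  + by move=> e; move: (Yimg a ax); rewrite e eqxx.
  + exact: inj.
- by move=> z /=; case: (eqVneq z x) => [_|zx]; [exact: YF|exact: phiF].
- move=> a b /=; case: (eqVneq a x) => [->|ax]; case: (eqVneq b x) => [->|bx].
  + by rewrite grid_le_refl lexx.
  + exact: H2.
  + exact: H1.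
  + exact: ord.
Qed.

Lemma get_copy d (P : finPOrderType d) n t (F : {set grid n t}) (X : grid n t) :
  induced_saturated P F -> X \notin F ->
  exists phi : P -> grid n t, exists x, induced_copy (X |: F) phi /\ phi x = X.
Proof.
move=> [Hfree Hsat] XF; have [phi Hc] := Hsat X XF.
case: (pickP (fun x => phi x == X)) => [x /eqP e|none].
  by exists phi, x.
exfalso; apply: Hfree; exists phi; case: Hc => [inj [inF ord]]; split => //; split => // z.
by have := inF z; rewrite in_setU1 none.
Qed.

Lemma down_lemma d (P : finPOrderType d) n t (F : {set grid n t}) (X Y : grid n t) :
  UCTP P -> induced_saturated P F -> X \notin F -> Y \in F -> grid_le Y X ->
  (forall C, C \in F -> grid_le C X -> grid_le C Y) ->
  (forall C, C \in F -> grid_le Y C -> C = Y \/ grid_le X C) -> False.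
Proof.
move=> U Hs XF YF YX HA HB.
have [phi [x [Hc ex]]] := get_copy Hs XF.
have Hc' := Hc; case: Hc' => [inj [inF ord]].
have phiF : forall z, z != x -> phi z \in F.
  move=> z zx; have := inF z; rewrite in_setU1; case/orP => // /eqP e.
  by move: zx; rewrite -(inj z x (etrans e (esym ex))) eqxx.
have Yimg : forall w, w != x -> phi w != Y.
  move=> w wx; apply/eqP => ew.
  have wlx : (w <= x)%O by rewrite -ord ex ew.
  have cov : covers x w.
    split; first exact: wx. split; first exact: wlx.
    move=> [z [zx zw wz zx']].
    have : grid_le (phi z) Y by apply: HA; [exact: phiF|rewrite -ex ord].
    rewrite -ew ord => zw'.
    by move: zw; rewrite (@le_anti _ _ z w) ?zw' ?wz ?eqxx.
  have [u [ux uw [_ [ulx nb]]]] := U x w cov.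
  have : grid_le (phi u) Y by apply: HA; [exact: phiF|rewrite -ex ord].
  rewrite -ew ord => uw'.
  by apply: nb; exists w; split => //; rewrite eq_sym.
apply: (@replace_copy _ _ _ _ F phi x Y); rewrite ?ex //; last by case: Hs.
- move=> z zx; apply/idP/idP => [zY|zlx].
    by rewrite -ord ex; exact: grid_le_trans zY YX.
  by apply: HA; [exact: phiF|rewrite -ex ord].
- move=> z zx; apply/idP/idP => [Yz|xz].
    case: (HB _ (phiF z zx) Yz) => [e|Xz]; first by move: (Yimg z zx); rewrite e eqxx.
    by rewrite -ord ex.
  by apply: grid_le_trans YX _; rewrite -ex ord.
Qed.

Lemma up_lemma d (P : finPOrderType d) n t (F : {set grid n t}) (X Y : grid n t) :
  UCTP P -> induced_saturated P F -> X \notin F -> Y \in F -> grid_le X Y ->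
  (forall C, C \in F -> grid_le X C -> grid_le Y C) ->
  (forall C, C \in F -> grid_le C Y -> C = Y \/ grid_le C X) -> False.
Proof.
move=> U Hs XF YF XY HA HB.
have [phi [x [Hc ex]]] := get_copy Hs XF.
have Hc' := Hc; case: Hc' => [inj [inF ord]].
have phiF : forall z, z != x -> phi z \in F.
  move=> z zx; have := inF z; rewrite in_setU1; case/orP => // /eqP e.
  by move: zx; rewrite -(inj z x (etrans e (esym ex))) eqxx.
have Yimg : forall w, w != x -> phi w != Y.
  move=> w wx; apply/eqP => ew.
  have xlw : (x <= w)%O by rewrite -ord ex ew.
  have cov : covers w x.
    split; first by rewrite eq_sym. split; first exact: xlw.
    move=> [z [zw zx xz zw']].
    have : grid_le Y (phi z) by apply: HA; [exact: phiF|rewrite -ex ord].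
    rewrite -ew ord => wz.
    by move: zw; rewrite (@le_anti _ _ z w) ?zw' ?wz ?eqxx.
  have [u [uw ux [_ [ulw nb]]]] := U w x cov.
  have uY : grid_le (phi u) Y by rewrite -ew ord.
  case: (HB _ (phiF u ux) uY) => [e|uX].
    by move: uw; rewrite (inj u w (etrans e (esym ew))) eqxx.
  apply: nb; exists x; split; [by rewrite eq_sym|by rewrite eq_sym|by rewrite -ord ex|exact: xlw].
apply: (@replace_copy _ _ _ _ F phi x Y); rewrite ?ex //; last by case: Hs.
- move=> z zx; apply/idP/idP => [zY|zlx].
    case: (HB _ (phiF z zx) zY) => [e|zX]; first by move: (Yimg z zx); rewrite e eqxx.
    by rewrite -ord ex.
  by apply: grid_le_trans _ XY; rewrite -ex ord.
- move=> z zx; apply/idP/idP => [Yz|xz].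
    by rewrite -ord ex; exact: grid_le_trans XY Yz.
  by apply: HA; [exact: phiF|rewrite -ex ord].
Qed.

Definition wit n t (F : {set grid n t}) (i : 'I_n) (p : grid n t * grid n t) : bool :=
  [&& p.1 \in F, p.2 \in F, (p.1 i < p.2 i)%N & [forall j, (j != i) ==> (p.2 j <= p.1 j)%N]].

Lemma sum_eq n t (Y C : grid n t) :
  grid_le Y C -> (\sum_j (C j : nat) <= \sum_j (Y j : nat))%N -> C = Y.
Proof.
move=> /grid_leP YC hs; apply/ffunP => j; apply/val_inj/eqP.
rewrite eqn_leq YC andbT.
have : (\sum_j (C j - Y j) == 0)%N.
  by rewrite sumnB // subn_eq0.
by rewrite sum_nat_eq0 => /forallP /(_ j); rewrite subn_eq0.
Qed.

Lemma witness n t d (P : finPOrderType d) (F : {set grid n t}) (i : 'I_n) :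
  (2 <= t)%N -> (2 <= #|P|)%N -> UCTP P -> induced_saturated P F ->
  exists p, wit F i p.
Proof.
move=> ht hP U Hs.
case: (boolP [exists p, wit F i p]) => [/existsP //|/existsPn nw]; exfalso.
have nw' : forall A B, A \in F -> B \in F -> (A i < B i)%N ->
    (forall j, j != i -> (B j <= A j)%N) -> False.
  move=> A B AF BF lt H; have := nw (A, B); rewrite /wit /= AF BF lt /=.
  move/negP; apply; apply/forallP => j; apply/implyP; exact: H.
have ht0 : (0 < t)%N by apply: leq_trans ht.
case: (set_0Vmem F) => [F0|[Y0 Y0F]].
  pose f : grid n t := [ffun _ => Ordinal ht0].
  have fF : f \notin F by rewrite F0 inE.
  have [phi [inj [inF _]]] := Hs.2 f fF.
  move/card_gt1P: hP => [a [b [_ _ ab]]].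
  have := inF a; have := inF b; rewrite F0 setU0 !inE => /eqP hb /eqP ha.
  by move: ab; rewrite (inj a b (etrans ha (esym hb))) eqxx.
case: (boolP [exists Y in F, (Y i).+1 < t]).
  move=> /existsP [Y1 HY1].
  case: (@arg_maxnP _ Y1 (fun Y : grid n t => (Y \in F) && ((Y i).+1 < t)) (fun Y : grid n t => \sum_j (Y j : nat)) HY1) => Y /andP [YF hY] Ymax.
  pose X : grid n t := [ffun j => if j == i then Ordinal hY else Y j].
  apply: (@down_lemma d P n t F X Y U Hs).
  - apply/negP => XF; apply: (nw' Y X YF XF); first by rewrite ffunE eqxx /=.
    by move=> j ji; rewrite ffunE (negbTE ji).
  - exact: YF.
  - apply/grid_leP => j; rewrite ffunE; case: eqP => [->|_] //=.
  - move=> C CF /grid_leP CX; apply/grid_leP => j.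
    case: (eqVneq j i) => [->|ji].
      rewrite leqNgt; apply/negP => lt; apply: (nw' Y C YF CF lt) => k ki.
      by have := CX k; rewrite ffunE (negbTE ki).
    by have := CX j; rewrite ffunE (negbTE ji).
  - move=> C CF YC; case: (ltnP (Y i) (C i)) => h.
      right; apply/grid_leP => j; rewrite ffunE; case: eqP => [->|_] //=.
      exact: (grid_leP _ _ YC j).
    left; apply: sum_eq => //; apply: Ymax; rewrite CF /=.
    by apply: (leq_ltn_trans _ hY); rewrite ltnS.
move=> /existsPn hall.
have hall' : forall C, C \in F -> (t <= (C i).+1)%N.
  by move=> C CF; have := hall C; rewrite CF /= ltnNge => /negbNE.
case: (@arg_minnP _ Y0 (fun Y : grid n t => Y \in F) (fun Y : grid n t => \sum_j (Y j : nat)) Y0F) => Y YF Ymin.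
have hX : ((Y i).-1 < t)%N by apply: leq_ltn_trans (leq_pred _) (ltn_ord _).
have Yi := hall' Y YF.
pose X : grid n t := [ffun j => if j == i then Ordinal hX else Y j].
apply: (@up_lemma d P n t F X Y U Hs).
- apply/negP => XF; have := hall' X XF; rewrite ffunE eqxx /=.
  have Yp : (0 < Y i)%N by move: Yi ht; clear; lia.
  rewrite prednK //; have := ltn_ord (Y i); move=> a b; have := leq_ltn_trans b a; by rewrite ltnn.
- exact: YF.
- apply/grid_leP => j; rewrite ffunE; case: eqP => [->|_] //=; exact: leq_pred.
- move=> C CF /grid_leP XC; apply/grid_leP => j.
  case: (eqVneq j i) => [->|ji].
    have := hall' C CF; have := ltn_ord (Y i); move=> a b; rewrite -ltnS; exact: leq_trans a b.
  by have := XC j; rewrite ffunE (negbTE ji).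
- move=> C CF CY; left; apply: esym; apply: sum_eq => //; exact: Ymin.
Qed.

Theorem mainTheorem3 (t : nat) (d : Order.disp_t) (P : finPOrderType d) :
  (2 <= t)%N -> (2 <= #|P|)%N -> UCTP P ->
  exists c N : nat, (0 < c)%N /\
    forall n : nat, (N <= n)%N ->
      forall F : {set grid n t}, induced_saturated P F ->
        (n <= c * #|F| ^ 2)%N.
Proof.
move=> ht hP U; exists 1, 0; split => // n _ F Hs.
have ht0 : (0 < t)%N by apply: leq_trans ht.
pose f0 : grid n t := [ffun _ => Ordinal ht0].
pose g i := odflt (f0, f0) [pick p | wit F i p].
have gw : forall i, wit F i (g i).
  move=> i; rewrite /g; case: pickP => [p //|none]; exfalso.
  have [p hp] := witness i ht hP U Hs.
  by rewrite none in hp.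
have ginj : injective g.
  move=> i i' e; apply/eqP; apply/negP => ne.
  have := gw i; have := gw i'; rewrite -e /wit => /and4P [_ _ _ /forallP H] /and4P [_ _ lt _].
  have := implyP (H i) (introN idP ne); by rewrite leqNgt lt.
apply: (@leq_trans #|g @: [set: 'I_n]|); first by rewrite card_imset // cardsT card_ord.
rewrite mul1n -mulnn -cardsX; apply: subset_leq_card; apply/subsetP => p /imsetP [i _ ->].
by have /and4P [h1 h2 _ _] := gw i; rewrite inE h1 h2.
Qed.
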